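(* Let $\Lambda$ be a ring and $\Gamma$ a (not necessarily unital) subring of $\Lambda$ such that $\Lambda=\Gamma\oplus J(\Lambda)$ as additive groups, where $J(\Lambda)$ is the Jacobson radical of $\Lambda$. Then every central idempotent of $\Lambda$ lies in $\Gamma$. *)

(* Defs.v *)
From HB Require Import structures.
From mathcomp Require Import all_boot all_order all_algebra.
Set Implicit Arguments. Unset Strict Implicit. Unset Printing Implicit Defensive.
Import GRing.Theory.
Local Open Scope ring_scope.

Definition left_ideal (R : nzRingType) (I : R -> Prop) : Prop :=
  I 0 /\ (forall x y, I x -> I y -> I (x - y)) /\ (forall r x, I x -> I (r * x)).

Definition maximal_left_ideal (R : nzRingType) (I : R -> Prop) : Prop :=
  left_ideal I /\ ~ I 1 /\
  (forall K : R -> Prop, left_ideal K -> ~ K 1 -> (forall x, I x -> K x) ->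
     forall x, K x -> I x).

Definition jacobson (R : nzRingType) (x : R) : Prop :=
  forall I : R -> Prop, maximal_left_ideal I -> I x.

Definition subring_nu (R : nzRingType) (G : R -> Prop) : Prop :=
  G 0 /\ (forall x y, G x -> G y -> G (x - y)) /\ (forall x y, G x -> G y -> G (x * y)).

Definition direct_sum_with_jacobson (R : nzRingType) (G : R -> Prop) : Prop :=
  (forall x : R, exists g j, G g /\ jacobson j /\ x = g + j) /\
  (forall x : R, G x -> jacobson x -> x = 0).

Definition central_idempotent (R : nzRingType) (e : R) : Prop :=
  e * e = e /\ forall x : R, e * x = x * e.

(* Main.v *)
Require Import Defs.
From HB Require Import structures.
From mathcomp Require Import all_boot all_order all_algebra.
From mathcomp Require Import boolp classical_sets.
Import GRing.Theory.

Section Aux.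
Local Open Scope classical_set_scope.
Local Open Scope ring_scope.
Variable R : nzRingType.
Lemma zmodH (V : zmodType) (x y z w : V) : ((x - y) - z - (x - w) = (w - y) - z).
Proof. by rewrite addrAC opprB [_ + (w - x)]addrC addrA subrK. Qed.


Lemma jac0 : @jacobson R 0.
Proof. by move=> I [[I0 _] _]. Qed.
Lemma jacB (x y : R) : jacobson x -> jacobson y -> jacobson (x - y).
Proof. by move=> Hx Hy I HI; case: (HI) => [[_ [Is _]] _]; apply: Is; [apply: Hx|apply: Hy]. Qed.
Lemma jacM (r x : R) : jacobson x -> jacobson (r * x).
Proof. by move=> Hx I HI; case: (HI) => [[_ [_ Im]] _]; apply: Im; apply: Hx. Qed.

Lemma exists_max (u : R) : u * u = u -> u != 0 ->
  exists M : R -> Prop, maximal_left_ideal M /\ M (1 - u).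
Proof.
move=> uu un0.
pose B : set R := fun x => exists r, x = r * (1 - u).
have B1 : ~ B 1.
  move=> [r Hr]; move/negP: un0; apply.
  apply/eqP; rewrite -[u]mul1r Hr -mulrA mulrBl mul1r uu subrr mulr0 //.
have B0 : B 0 by exists 0; rewrite mul0r.
have BB x y : B x -> B y -> B (x - y).
  by move=> [r ->] [s ->]; exists (r - s); rewrite mulrBl.
have BM r x : B x -> B (r * x).
  by move=> [s ->]; exists (r * s); rewrite mulrA.
pose P : set (set R) := fun K => left_ideal (K `|` B) /\ ~ (K `|` B) 1.
have [A [[[A0 [As Am]] A1] Amax]] : exists A, P A /\ forall K, A `<` K -> ~ P K.
  apply: Zorn_bigcup => F FP Ftot.
  set U := \bigcup_(X in F) X.
  have lift X z : F X -> (X `|` B) z -> (U `|` B) z.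
    by move=> FX [Xz|Bz]; [left; exists X|right].
  split; last first.
    by move=> [[X FX X1]|/B1//]; case: (FP X FX) => _; apply; left.
  split; first by right.
  split.
    move=> x y [[X1 F1 x1]|Bx] [[X2 F2 y2]|By].
    - have [S12|S21] := Ftot X1 X2 F1 F2.
      + apply: (lift X2) => //; case: (FP X2 F2) => [[_ [Hs _]] _].
        by apply: Hs; left => //; apply: S12.
      + apply: (lift X1) => //; case: (FP X1 F1) => [[_ [Hs _]] _].
        by apply: Hs; left => //; apply: S21.
    - apply: (lift X1) => //; case: (FP X1 F1) => [[_ [Hs _]] _].
      by apply: Hs; [left|right].
    - apply: (lift X2) => //; case: (FP X2 F2) => [[_ [Hs _]] _].
      by apply: Hs; [right|left].
    - by right; apply: BB.
  move=> r x [[X FX Xx]|Bx]; last by right; apply: BM.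
  apply: (lift X) => //; case: (FP X FX) => [[_ [_ Hm]] _].
  by apply: Hm; left.
exists (A `|` B); split; last by right; exists 1; rewrite mul1r.
split; first by [].
split; first by [].
move=> K [K0 [Ks Km]] K1 MK x Kx.
apply: contrapT => nMx.
have BK z : B z -> K z by move=> Bz; apply: MK; right.
have KBK z : (K `|` B) z -> K z by case=> // /BK.
apply: (Amax K).
  split; first by move=> z Az; apply: MK; left.
  by move=> KA; apply: nMx; left; apply: KA.
split; last by move/KBK.
split; first by left.
split.
  by move=> a b /KBK Ka /KBK Kb; left; apply: Ks.
by move=> r a /KBK Ka; left; apply: Km.
Qed.

Lemma jac_idem (u : R) : jacobson u -> u * u = u -> u = 0.
Proof.
move=> Ju uu; apply: contrapT => /eqP un0.
have [M [MM Mu1]] := @exists_max u uu un0.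
have [[M0 [Ms Mm]] [M1 _]] := MM.
apply: M1.
have -> : (1 : R) = u - (0 - (1 - u)) by rewrite sub0r opprK addrC subrK.
apply: (Ms); first exact: Ju.
by apply: Ms.
Qed.

End Aux.


Theorem lemma5p2 (R : nzRingType) (G : R -> Prop) :
  subring_nu G -> direct_sum_with_jacobson G ->
  forall e : R, central_idempotent e -> G e.
Proof.
Local Open Scope classical_set_scope.
Local Open Scope ring_scope.
move=> [G0 [Gs Gm]] [Hdec Hint] e [ee ec].
have [g [j [Gg [Jj Ej]]]] := Hdec e.
have jdef : j = e - g by rewrite Ej addrC addKr.
have gg : g * g = g.
  apply/eqP; rewrite -subr_eq0; apply/eqP; apply: Hint.
    by apply: Gs => //; apply: Gm.
  have gdef : g = e - j by rewrite jdef opprB addrC subrK.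
  have -> : g * g - g = (j - e * j) - (e * j - j * j).
    by rewrite gdef mulrBl !mulrBr ee -ec zmodH.
  by apply: jacB; apply: jacB => //; apply: jacM.
have e1g : e * (1 - g) = 0.
  apply: jac_idem.
    have -> : e * (1 - g) = e * j by rewrite jdef !mulrBr mulr1 ee.
    by apply: jacM.
  rewrite -mulrA [(1 - g) * _]mulrA -ec !mulrA ee -mulrA.
  by congr (e * _); rewrite mulrBl mul1r mulrBr mulr1 gg subrr subr0.
have e1g' : (1 - e) * g = 0.
  apply: jac_idem.
    have -> : (1 - e) * g = g * (0 - j).
      by rewrite jdef sub0r opprB mulrBl mulrBr mul1r gg ec.
    by apply: jacM; apply: jacB => //; apply: jac0.
  have gc : g * (1 - e) = (1 - e) * g by rewrite mulrBl mulrBr mul1r mulr1 ec.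
  rewrite -mulrA [g * _]mulrA gc -mulrA gg !mulrA.
  by congr (_ * g); rewrite mulrBl mul1r mulrBr mulr1 ee subrr subr0.
have h1 : e = e * g.
  by apply/eqP; rewrite -subr_eq0 -e1g mulrBr mulr1.
have h2 : g = e * g.
  by apply/eqP; rewrite -subr_eq0 -e1g' mulrBl mul1r.
by rewrite h1 -h2.
Qed.
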